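(* For the class $\mathcal{A}=\{A_\rho:\rho\in[0,1]\}$ of MWIS greedy heuristics (adaptive or non-adaptive), there is a distribution over sequences $x_1,\dots,x_T$ of MWIS instances on at most $n$ vertices such that every (possibly randomized) online learning algorithm has expected regret at least $1-o_n(1)$, where $o_n(1)$ is independent of $T$ and tends to $0$ as $n\to\infty$.
   Context: MWIS instance: undirected graph with nonnegative vertex weights. $A_\rho$ repeatedly selects, among vertices not yet selected or blocked, one maximizing $w_v/(1+\deg(v))^\rho$ (ties lexicographic), adds it, and blocks its neighbors; $\deg(v)$ is the original degree (non-adaptive) or the degree in the remaining induced subgraph (adaptive). $\mathrm{cost}(A_\rho,x)\in[0,1]$ is the total weight of the returned independent set (to be maximized). Online learning: at each step $t$ the learner chooses $A_t\in\mathcal{A}$ (possibly randomly) knowing only $x_1,\dots,x_{t-1}$; its regret on $x_1,\dots,x_T$ is $\frac1T\big(\sup_{A\in\mathcal{A}}\sum_{t=1}^T\mathrm{cost}(A,x_t)-\sum_{t=1}^T\mathrm{cost}(A_t,x_t)\big)$. *)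

(* Defs.v *)
From Stdlib Require Import Reals Lra List Arith ClassicalEpsilon.
Import ListNotations.
Open Scope R_scope.

(* An MWIS instance: vertices 0..nv-1, weights wt, adjacency adj. *)
Record Inst := mkInst { nv : nat; wt : nat -> R; adj : nat -> nat -> bool }.

Definition wf_inst (x : Inst) : Prop :=
  (forall v, (v < nv x)%nat -> 0 <= wt x v) /\
  (forall u v, (u < nv x)%nat -> (v < nv x)%nat -> adj x u v = adj x v u) /\
  (forall v, (v < nv x)%nat -> adj x v v = false).

Definition orig_deg (x : Inst) (u : nat) : nat :=
  length (filter (adj x u) (seq 0 (nv x))).

(* among cur :: l, the first (smallest-position) maximizer of score;
   lists are kept in increasing vertex order, so ties are broken
   lexicographically (smallest index wins). *)
Fixpoint best (score : nat -> R) (l : list nat) (cur : nat) : nat :=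
  match l with
  | [] => cur
  | v :: l' => if Rlt_dec (score cur) (score v) then best score l' v
               else best score l' cur
  end.

(* Greedy A_rho: returns total weight of the selected independent set.
   [avail] = vertices neither selected nor blocked (increasing order). *)
Fixpoint greedy (fuel : nat) (adaptive : bool) (rho : R) (x : Inst)
    (avail : list nat) : R :=
  match fuel with
  | O => 0
  | S f =>
    match avail with
    | [] => 0
    | v0 :: rest =>
      let deg u := if adaptive then length (filter (adj x u) avail)
                   else orig_deg x u in
      let sc u := wt x u / Rpower (1 + INR (deg u)) rho in
      let v := best sc rest v0 in
      wt x v + greedy f adaptive rho x
                 (filter (fun u => andb (negb (Nat.eqb u v)) (negb (adj x v u))) avail)
    end
  end.

Definition cost (adaptive : bool) (rho : R) (x : Inst) : R :=
  greedy (nv x) adaptive rho x (seq 0 (nv x)).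

Definition Rsup (E : R -> Prop) : R :=
  epsilon (inhabits 0) (fun s => is_lub E s).

Definition best_fixed (adaptive : bool) (xs : list Inst) : R :=
  Rsup (fun s => exists rho, 0 <= rho <= 1 /\
          s = fold_right Rplus 0 (map (cost adaptive rho) xs)).

Definition learner_total {Omega : Type} (adaptive : bool)
    (L : list Inst -> Omega -> R) (xs : list Inst) (w : Omega) : R :=
  fold_right Rplus 0
    (map (fun t => cost adaptive (L (firstn t xs) w) (nth t xs (mkInst 0 (fun _ => 0) (fun _ _ => false))))
         (seq 0 (length xs))).

Definition bounded_fun {Omega : Type} (f : Omega -> R) : Prop :=
  exists M, forall w, Rabs (f w) <= M.

(* Expectation over the learner's internal randomness: a normalized,
   monotone, linear functional on bounded functions (every probability
   measure induces one, by Hahn--Banach extension of its integral). *)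
Definition is_expectation {Omega : Type} (E : (Omega -> R) -> R) : Prop :=
  (forall c, E (fun _ => c) = c) /\
  (forall f g, bounded_fun f -> bounded_fun g ->
     E (fun w => f w + g w) = E f + E g) /\
  (forall c f, bounded_fun f -> E (fun w => c * f w) = c * E f) /\
  (forall f g, bounded_fun f -> bounded_fun g ->
     (forall w, f w <= g w) -> E f <= E g).

Definition valid_dist (adaptive : bool) (n T : nat) (D : list (R * list Inst)) : Prop :=
  (forall p xs, In (p, xs) D ->
     0 <= p /\ length xs = T /\
     (forall x, In x xs -> wf_inst x /\ (nv x <= n)%nat /\
        forall rho, 0 <= rho <= 1 -> 0 <= cost adaptive rho x <= 1)) /\
  fold_right Rplus 0 (map fst D) = 1.

Definition expected_regret {Omega : Type} (adaptive : bool) (T : nat)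
    (D : list (R * list Inst)) (E : (Omega -> R) -> R)
    (L : list Inst -> Omega -> R) : R :=
  / INR T * fold_right Rplus 0
    (map (fun pxs => fst pxs *
            (best_fixed adaptive (snd pxs) - E (learner_total adaptive L (snd pxs))))
         D).

(* Main.v *)
Require Import Defs.
From Stdlib Require Import Reals List Lra Lia Arith ClassicalEpsilon FunctionalExtensionality.
Import ListNotations.
Open Scope R_scope.

Lemma best_in sc l cur : In (best sc l cur) (cur :: l).
Proof.
  revert cur; induction l as [|v l IH]; intro cur; simpl; [auto|].
  destruct (Rlt_dec (sc cur) (sc v)).
  - destruct (IH v) as [H|H]; simpl; auto.
  - destruct (IH cur) as [H|H]; simpl; auto.
Qed.

Lemma best_max sc l cur y : In y (cur :: l) -> sc y <= sc (best sc l cur).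
Proof.
  revert cur y; induction l as [|v l IH]; intros cur y Hy; simpl.
  - destruct Hy as [<-|[]]; lra.
  - destruct (Rlt_dec (sc cur) (sc v)).
    + destruct Hy as [<-|Hy].
      * specialize (IH v v (or_introl eq_refl)); lra.
      * apply IH; exact Hy.
    + destruct Hy as [<-|[<-|Hy]].
      * apply IH; left; reflexivity.
      * specialize (IH cur cur (or_introl eq_refl)); lra.
      * apply IH; right; exact Hy.
Qed.

Lemma best_strict sc l cur y : In y (cur :: l) ->
  (forall z, In z (cur :: l) -> z <> y -> sc z < sc y) -> best sc l cur = y.
Proof.
  intros Hy Hs. destruct (Nat.eq_dec (best sc l cur) y) as [e|ne]; auto.
  exfalso. pose proof (best_max sc l cur y Hy).
  specialize (Hs _ (best_in sc l cur) ne). lra.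
Qed.

Lemma Rpower_pos' x y : 0 < Rpower x y.
Proof. unfold Rpower; apply exp_pos. Qed.

Lemma sum_filter_split (f : nat -> R) (k : nat -> bool) l :
  fold_right Rplus 0 (map f l) =
  fold_right Rplus 0 (map f (filter k l)) + fold_right Rplus 0 (map f (filter (fun u => negb (k u)) l)).
Proof.
  induction l as [|a l IH]; simpl; [lra|].
  destruct (k a); simpl; rewrite IH; lra.
Qed.

Lemma sum_zero (f : nat -> R) l : (forall u, In u l -> f u = 0) -> fold_right Rplus 0 (map f l) = 0.
Proof.
  induction l as [|a l IH]; intro H; simpl; [reflexivity|].
  rewrite H, IH; [lra| |left;auto]. intros; apply H; right; auto.
Qed.

Lemma sum_single (f : nat -> R) v l : NoDup l -> In v l ->
  (forall u, In u l -> u <> v -> f u = 0) -> fold_right Rplus 0 (map f l) = f v.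
Proof.
  induction l as [|a l IH]; intros Hnd Hin H0; [destruct Hin|].
  inversion Hnd; subst. simpl. destruct Hin as [<-|Hin].
  - rewrite sum_zero; [lra|]. intros u Hu. apply H0; [right; auto|].
    intro e; subst; contradiction.
  - rewrite H0; [|left; reflexivity|intro e; subst; contradiction].
    rewrite IH; auto; [lra|]. intros u Hu Hne; apply H0; auto; right; auto.
Qed.

Lemma filter_lt (k : nat -> bool) l v : In v l -> k v = false -> (length (filter k l) < length l)%nat.
Proof.
  induction l as [|a l IH]; intros Hin Hk; [destruct Hin|]. simpl.
  pose proof (filter_length_le k l).
  destruct Hin as [<-|Hin].
  - rewrite Hk; simpl; lia.
  - specialize (IH Hin Hk). destruct (k a); simpl; lia.
Qed.

Lemma greedy_indep : forall fuel ad rho x avail,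
  (length avail <= fuel)%nat -> NoDup avail ->
  (forall v, In v avail -> 0 <= wt x v) ->
  (forall u v, In u avail -> In v avail -> 0 < wt x u -> 0 < wt x v -> adj x u v = false) ->
  greedy fuel ad rho x avail = fold_right Rplus 0 (map (wt x) avail).
Proof.
  induction fuel as [|fuel IH]; intros ad rho x avail Hl Hnd Hw Hi.
  - destruct avail; simpl in *; [reflexivity| lia].
  - destruct avail as [|v0 rest]; [reflexivity|].
    cbn [greedy].
    match goal with |- context [best ?s rest v0] => set (sc := s) end.
    assert (Hsc : forall u, sc u = wt x u / Rpower (1 + INR (if ad then length (filter (adj x u) (v0 :: rest)) else orig_deg x u)) rho) by reflexivity.
    set (v := best sc rest v0).
    assert (Hv : In v (v0 :: rest)) by apply best_in.
    assert (Hm : forall y, In y (v0 :: rest) -> sc y <= sc v) by (intros; apply best_max; auto).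
    set (k := fun u => (negb (u =? v)%nat && negb (adj x v u))%bool).
    assert (Hkv : k v = false) by (unfold k; rewrite Nat.eqb_refl; reflexivity).
    rewrite IH.
    + rewrite (sum_filter_split (wt x) k (v0 :: rest)).
      destruct (Rlt_or_le 0 (wt x v)) as [Hpos|Hnp].
      * rewrite (sum_single (wt x) v (filter (fun u => negb (k u)) (v0 :: rest)));
          [lra| apply NoDup_filter; auto | apply filter_In; split; [auto| rewrite Hkv; reflexivity] |].
        intros u Hu Hne. apply filter_In in Hu as [Hu Hku].
        unfold k in Hku. destruct (Nat.eqb_spec u v); [contradiction|]. simpl in Hku.
        destruct (adj x v u) eqn:Ea; [|discriminate].
        destruct (Rlt_or_le 0 (wt x u)) as [Hu'|Hu']; [|specialize (Hw u Hu); lra].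
        rewrite (Hi v u) in Ea; auto; discriminate.
      * assert (Hall : forall u, In u (v0 :: rest) -> wt x u = 0).
        { intros u Hu. specialize (Hm u Hu). specialize (Hw u Hu) as Hwu.
          assert (Hv0 : wt x v = 0) by (specialize (Hw v Hv); lra).
          assert (sc v = 0) by (rewrite Hsc, Hv0; unfold Rdiv; ring).
          destruct (Rle_lt_or_eq _ _ Hwu) as [Hp|]; [|auto].
          exfalso. rewrite Hsc in Hm. 
          assert (0 < wt x u / Rpower (1 + INR (if ad then length (filter (adj x u) (v0 :: rest)) else orig_deg x u)) rho)
            by (apply Rdiv_lt_0_compat; [auto|apply Rpower_pos']).
          lra. }
        rewrite !sum_zero; [rewrite (Hall v Hv); lra| |].
        all: intros u Hu; try apply filter_In in Hu as [Hu _]; apply Hall; auto.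
    + apply Nat.lt_succ_r. eapply Nat.lt_le_trans; [eapply filter_lt; eauto| simpl in *; lia].
    + apply NoDup_filter; auto.
    + intros u Hu; apply filter_In in Hu as [Hu _]; auto.
    + intros u w Hu Hw'; apply filter_In in Hu as [Hu _]; apply filter_In in Hw' as [Hw' _]; auto.
Qed.



Ltac dest_cmp := repeat match goal with
 | |- context [Nat.eqb ?a ?b] => destruct (Nat.eqb_spec a b)
 | |- context [Nat.ltb ?a ?b] => destruct (Nat.ltb_spec a b)
 | H: context [Nat.eqb ?a ?b] |- _ => destruct (Nat.eqb_spec a b)
 | H: context [Nat.ltb ?a ?b] |- _ => destruct (Nat.ltb_spec a b) end.

Definition cls (m v : nat) : nat :=
  if (v =? 0)%nat then 0%nat else if (v =? 1)%nat then 1%nat else if (v =? 2)%nat then 2%nat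
  else if (v <? 3 + m)%nat then 3%nat else if (v <? 5 + m)%nat then 4%nat
  else if (v <? 6 + (m + m))%nat then 5%nat else 6%nat.

Definition tab (c1 c2 : nat) : bool :=
  match c1, c2 with
  | 0, 1 | 0, 2 | 0, 3 | 0, 4 => true
  | 1, 0 | 1, 2 | 1, 5 => true
  | 2, 0 | 2, 1 | 2, 3 => true
  | 3, 0 | 3, 2 | 3, 4 | 3, 5 => true
  | 4, 0 | 4, 3 => true
  | 5, 1 | 5, 3 => true
  | _, _ => false
  end%nat.

Lemma tab_sym c1 c2 : tab c1 c2 = tab c2 c1.
Proof.
  destruct c1 as [|[|[|[|[|[|c1]]]]]]; destruct c2 as [|[|[|[|[|[|c2]]]]]]; reflexivity.
Qed.

Lemma tab_irr c : tab c c = false.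
Proof. destruct c as [|[|[|[|[|[|c]]]]]]; reflexivity. Qed.

Definition Nm (m : nat) : nat := (6 + (m + m))%nat.

Lemma cls_small m y c : (c < 3)%nat -> cls m y = c -> y = c.
Proof. intros Hc H; unfold cls in H; dest_cmp; simpl in *; lia. Qed.

Lemma cls_blk m y lo len c : (forall z, (lo <= z < lo + len)%nat -> cls m z = c) ->
  In y (seq lo len) -> cls m y = c.
Proof. intros H Hy; apply in_seq in Hy; apply H; lia. Qed.

Lemma map_blk m lo len c : (forall z, (lo <= z < lo + len)%nat -> cls m z = c) ->
  map (cls m) (seq lo len) = repeat c len.
Proof.
  intro H. rewrite (map_ext_in _ (fun _ => c)).
  - rewrite map_const, length_seq; reflexivity.
  - intros y Hy; eapply cls_blk; eauto.
Qed.

Lemma cls_seq m : map (cls m) (seq 0 (Nm m)) = [0;1;2]%nat ++ repeat 3%nat m ++ repeat 4%nat 2 ++ repeat 5%nat (S m).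
Proof.
  assert (E : Nm m = (3 + (m + (2 + S m)))%nat) by (unfold Nm; lia).
  rewrite E, !seq_app, !map_app.
  simpl (0+3)%nat. rewrite (map_blk m 3 m 3), (map_blk m (3+m) 2 4), (map_blk m (3+m+2) (S m) 5).
  - reflexivity.
  - intros z Hz; unfold cls; dest_cmp; simpl; lia.
  - intros z Hz; unfold cls; dest_cmp; simpl; lia.
  - intros z Hz; unfold cls; dest_cmp; simpl; lia.
Qed.

Definition uu (m : nat) : R := / (INR m + 2).
Definition wq (m : nat) : R := 2 * uu m.
Definition Dp m := INR m + 5.
Definition Dq m := INR m + 4.
Definition Dr m := INR m + 3.
Definition DP m := INR m + 6.
Definition al m := ln (Dp m) - ln (Dq m).
Definition ga m := ln (Dq m) - ln (Dr m).
Definition wp m a := wq m * exp (a * al m).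
Definition wr m b := wq m * exp (- (b * ga m)).

Definition wtab (m : nat) (a b : R) (c : nat) : R :=
  match c with
  | O => wp m a | S O => wq m | S (S O) => wr m b | S (S (S O)) => uu m | _ => 0
  end.

Definition G (m : nat) (a b : R) : Inst :=
  mkInst (Nm m) (fun v => wtab m a b (cls m v)) (fun u v => tab (cls m u) (cls m v)).

Definition degc m c := length (filter (tab c) ([0;1;2]%nat ++ repeat 3%nat m ++ repeat 4%nat 2 ++ repeat 5%nat (S m))).

Lemma len_filter_map (t : nat -> bool) (g : nat -> nat) l :
  length (filter (fun y => t (g y)) l) = length (filter t (map g l)).
Proof. induction l; simpl; auto. destruct (t (g a)); simpl; auto. Qed.

Lemma orig_deg_G m a b y : orig_deg (G m a b) y = degc m (cls m y).
Proof.
  unfold orig_deg, degc. simpl nv. rewrite <- cls_seq.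
  apply (len_filter_map (tab (cls m y)) (cls m)).
Qed.

Lemma filter_repeat (t : nat -> bool) c k : filter t (repeat c k) = if t c then repeat c k else [].
Proof. induction k; simpl; destruct (t c); simpl; auto; rewrite IHk; auto. Qed.

Lemma degc_vals m : degc m 0 = (m + 4)%nat /\ degc m 1 = (m + 3)%nat /\ degc m 2 = (m+2)%nat /\ degc m 3 = (m+5)%nat.
Proof.
  unfold degc; rewrite !filter_app, !filter_repeat; simpl;
  rewrite ?length_app, ?repeat_length; simpl; repeat split; lia.
Qed.

Lemma wt_nonneg m a b c : 0 <= wtab m a b c.
Proof.
  assert (0 < uu m) by (unfold uu; apply Rinv_0_lt_compat; pose proof (pos_INR m); lra).
  destruct c as [|[|[|[|c]]]]; simpl; unfold wp, wr, wq;
  try (pose proof (exp_pos (a * al m))); try (pose proof (exp_pos (- (b * ga m)))); try nra; lra.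
Qed.

Definition scoreC m a b rho c := wtab m a b c / Rpower (1 + INR (degc m c)) rho.

Lemma div_Rpower w D rho : w / Rpower D rho = w * exp (- (rho * ln D)).
Proof. unfold Rpower, Rdiv; rewrite exp_Ropp; reflexivity. Qed.

Lemma uu_pos m : 0 < uu m.
Proof. unfold uu; apply Rinv_0_lt_compat; pose proof (pos_INR m); lra. Qed.

Lemma ln_facts m : 0 < ln (Dr m) /\ ln (Dr m) < ln (Dq m) /\ ln (Dq m) < ln (Dp m) /\ ln (Dp m) < ln (DP m).
Proof.
  pose proof (pos_INR m). unfold Dr, Dq, Dp, DP.
  rewrite <- ln_1. repeat split; apply ln_increasing; lra.
Qed.

Lemma scores m a b rho : 0 <= rho ->
  let s := scoreC m a b rho in
  s 3%nat < s 1%nat /\ (forall c, (4 <= c)%nat -> s c = 0) /\ 0 < s 1%nat /\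
  (a < rho -> s 0%nat < s 1%nat) /\ (rho < b -> s 2%nat < s 1%nat) /\
  (rho < a -> s 1%nat < s 0%nat) /\ (b < rho -> s 1%nat < s 2%nat).
Proof.
  intros Hr s.
  destruct (degc_vals m) as (E0 & E1 & E2 & E3).
  assert (H0 : s 0%nat = wq m * exp (a * al m - rho * ln (Dp m))).
  { unfold s, scoreC; rewrite E0, div_Rpower; simpl wtab; unfold wp.
    replace (1 + INR (m+4)) with (Dp m) by (unfold Dp; rewrite plus_INR; simpl; lra).
    rewrite Rmult_assoc, <- exp_plus; f_equal; f_equal; ring. }
  assert (H1 : s 1%nat = wq m * exp (- (rho * ln (Dq m)))).
  { unfold s, scoreC; rewrite E1, div_Rpower; simpl wtab.
    replace (1 + INR (m+3)) with (Dq m) by (unfold Dq; rewrite plus_INR; simpl; lra). reflexivity. }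
  assert (H2 : s 2%nat = wq m * exp (- (b * ga m) - rho * ln (Dr m))).
  { unfold s, scoreC; rewrite E2, div_Rpower; simpl wtab; unfold wr.
    replace (1 + INR (m+2)) with (Dr m) by (unfold Dr; rewrite plus_INR; simpl; lra).
    rewrite Rmult_assoc, <- exp_plus; f_equal; f_equal; ring. }
  assert (H3 : s 3%nat = uu m * exp (- (rho * ln (DP m)))).
  { unfold s, scoreC; rewrite E3, div_Rpower; simpl wtab.
    replace (1 + INR (m+5)) with (DP m) by (unfold DP; rewrite plus_INR; simpl; lra). reflexivity. }
  pose proof (uu_pos m) as Hu. assert (Hq : 0 < wq m) by (unfold wq; lra).
  destruct (ln_facts m) as (L1 & L2 & L3 & L4).
  unfold al, ga in *.
  repeat split.
  - rewrite H1, H3. apply Rle_lt_trans with (uu m * exp (- (rho * ln (Dq m)))).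
    + apply Rmult_le_compat_l; [lra|].
      destruct (Rle_lt_or_eq _ _ Hr) as [Hr'|<-].
      * left; apply exp_increasing. apply Ropp_lt_contravar. apply Rmult_lt_compat_l; lra.
      * right; f_equal; ring.
    + apply Rmult_lt_compat_r; [apply exp_pos| unfold wq; lra].
  - intros c Hc. unfold s, scoreC.
    destruct c as [|[|[|[|c]]]]; try lia. simpl wtab. unfold Rdiv; ring.
  - rewrite H1; apply Rmult_lt_0_compat; [auto|apply exp_pos].
  - intro H; rewrite H0, H1; apply Rmult_lt_compat_l; [auto|]; apply exp_increasing.
    assert (0 < (rho - a) * (ln (Dp m) - ln (Dq m))) by (apply Rmult_lt_0_compat; lra). nra.
  - intro H; rewrite H2, H1; apply Rmult_lt_compat_l; [auto|]; apply exp_increasing.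
    assert (0 < (b - rho) * (ln (Dq m) - ln (Dr m))) by (apply Rmult_lt_0_compat; lra). nra.
  - intro H; rewrite H0, H1; apply Rmult_lt_compat_l; [auto|]; apply exp_increasing.
    assert (0 < (a - rho) * (ln (Dp m) - ln (Dq m))) by (apply Rmult_lt_0_compat; lra). nra.
  - intro H; rewrite H2, H1; apply Rmult_lt_compat_l; [auto|]; apply exp_increasing.
    assert (0 < (rho - b) * (ln (Dq m) - ln (Dr m))) by (apply Rmult_lt_0_compat; lra). nra.
Qed.


Definition scf (ad : bool) (rho : R) (x : Inst) (avail : list nat) (u : nat) : R := wt x u / Rpower (1 + INR (if ad then length (filter (adj x u) avail) else orig_deg x u)) rho.

Lemma greedy_S f ad rho x v0 rest : greedy (S f) ad rho x (v0::rest) =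
  wt x (best (scf ad rho x (v0::rest)) rest v0) +
  greedy f ad rho x (filter (fun u => (negb (u =? best (scf ad rho x (v0::rest)) rest v0)%nat &&
      negb (adj x (best (scf ad rho x (v0::rest)) rest v0) u))%bool) (v0::rest)).
Proof. reflexivity. Qed.

Lemma keep_cls3 v c : (v < 3)%nat -> (c <= 3)%nat -> c <> v -> tab v c = false -> c = 3%nat.
Proof.
  intros. destruct v as [|[|[|v]]]; try lia; destruct c as [|[|[|[|c]]]]; simpl in *; try lia; discriminate.
Qed.

Lemma wtab_big m a b c : (4 <= c)%nat -> wtab m a b c = 0.
Proof. intro; destruct c as [|[|[|[|c]]]]; try lia; reflexivity. Qed.

Lemma sum_ind (f : nat -> R) (k : nat -> bool) l :
  fold_right Rplus 0 (map f (filter k l)) = fold_right Rplus 0 (map (fun y => if k y then f y else 0) l).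
Proof. induction l; simpl; auto. destruct (k a); simpl; rewrite IHl; lra. Qed.

Lemma sum_app (l1 l2 : list R) : fold_right Rplus 0 (l1 ++ l2) = fold_right Rplus 0 l1 + fold_right Rplus 0 l2.
Proof. induction l1; simpl; [lra|rewrite IHl1; lra]. Qed.

Lemma sum_repeat c k : fold_right Rplus 0 (repeat c k) = INR k * c.
Proof. induction k; simpl repeat; simpl fold_right; [simpl; lra|rewrite IHk, S_INR; lra]. Qed.

Definition hh m a b v c := if (negb (c =? v)%nat && negb (tab v c))%bool then wtab m a b c else 0.

Lemma G_pick m a b ad rho : 0 <= rho ->
  exists v, (v = 0 \/ v = 1 \/ v = 2)%nat /\ (a < rho < b -> v = 1%nat) /\ (rho < a \/ b < rho -> v <> 1%nat) /\
  cost ad rho (G m a b) = wtab m a b v + (if (v =? 1)%nat then INR m * uu m else 0).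
Proof.
  intro Hr. destruct (scores m a b rho Hr) as (S3 & S4 & S1 & Sa & Sb & Sc & Sd).
  unfold cost.
  change (nv (G m a b)) with (S (5 + (m+m))).
  change (seq 0 (S (5+(m+m)))) with (0%nat :: seq 1 (5+(m+m))).
  rewrite greedy_S.
  set (L := 0%nat :: seq 1 (5+(m+m))).
  assert (HL : L = seq 0 (Nm m)) by reflexivity.
  assert (Hsc : forall y, scf ad rho (G m a b) L y = scoreC m a b rho (cls m y)).
  { intro y. unfold scf, scoreC. simpl wt. rewrite <- orig_deg_G with (a := a) (b := b) (y := y).
    destruct ad; reflexivity. }
  set (sc := scf ad rho (G m a b) L) in *.
  set (v := best sc _ _).
  assert (Hin : In v L) by apply best_in.
  assert (Hmax : forall y, In y L -> sc y <= sc v) by (intros; apply best_max; auto).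
  assert (InL : forall y, (y < Nm m)%nat -> In y L) by (intros; rewrite HL; apply in_seq; lia).
  assert (I0 : In 0%nat L) by (apply InL; unfold Nm; lia).
  assert (I1 : In 1%nat L) by (apply InL; unfold Nm; lia).
  assert (I2 : In 2%nat L) by (apply InL; unfold Nm; lia).
  assert (M1 := Hmax _ I1). assert (M0 := Hmax _ I0). assert (M2 := Hmax _ I2).
  rewrite !Hsc in M0, M1, M2. assert (C0 : cls m 0 = 0%nat) by reflexivity. assert (C1 : cls m 1 = 1%nat) by reflexivity. assert (C2 : cls m 2 = 2%nat) by reflexivity. rewrite C0 in M0. rewrite C1 in M1. rewrite C2 in M2.
  assert (Hc : (cls m v < 3)%nat).
  { destruct (Nat.lt_ge_cases (cls m v) 3) as [|Hge]; auto. exfalso.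
    destruct (Nat.eq_dec (cls m v) 3) as [e|ne].
    - rewrite e in M1; lra.
    - rewrite (S4 (cls m v)) in M1; [lra|lia]. }
  assert (Hv : v = cls m v) by (eapply cls_small; eauto).
  exists v. split; [lia|]. split; [|split].
  - intros [Ha Hb].
    destruct (Nat.eq_dec v 0) as [e|]; [exfalso; rewrite e, C0 in M1; specialize (Sa Ha); lra|].
    destruct (Nat.eq_dec v 2) as [e|]; [exfalso; rewrite e, C2 in M1; specialize (Sb Hb); lra|]. lia.
  - intros [H|H] e; rewrite e, C1 in M0, M2; [specialize (Sc H); lra| specialize (Sd H); lra].
  - simpl wt at 1. rewrite <- Hv. f_equal.
    rewrite greedy_indep.
    + rewrite sum_ind, HL.
      rewrite (map_ext_in _ (fun y => hh m a b v (cls m y))).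
      * rewrite <- (map_map (cls m) (hh m a b v)), cls_seq.
        destruct (Nat.eq_dec v 0) as [e|]; [|destruct (Nat.eq_dec v 1) as [e|]; [|assert (e : v = 2%nat) by lia]];
        rewrite e, !map_app, !map_repeat, !sum_app, !sum_repeat; unfold hh; simpl; ring.
      * intros y Hy. unfold hh. simpl wt. simpl adj. rewrite <- Hv.
        destruct (Nat.eqb_spec y v) as [e|ne].
        -- subst y. rewrite <- Hv, Nat.eqb_refl. reflexivity.
        -- destruct (Nat.eqb_spec (cls m y) v) as [e|]; [|reflexivity].
           exfalso; apply ne. apply cls_small with m; [lia| auto].
    + apply Nat.lt_succ_r. assert (EL : length L = S (5+(m+m))) by (unfold L; simpl; rewrite length_seq; reflexivity). rewrite <- EL.
      apply filter_lt with v; auto. rewrite Nat.eqb_refl; reflexivity.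
    + apply NoDup_filter; rewrite HL; apply seq_NoDup.
    + intros; simpl; apply wt_nonneg.
    + intros u w Hu Hw Pu Pw.
      apply filter_In in Hu as [_ Ku]; apply filter_In in Hw as [_ Kw].
      simpl adj in *. simpl wt in *.
      assert (G3 : forall y, (negb (y =? v)%nat && negb (tab (cls m v) (cls m y)))%bool = true ->
                 0 < wtab m a b (cls m y) -> cls m y = 3%nat).
      { intros y K P. apply andb_prop in K as [K1 K2]. apply Bool.negb_true_iff in K1, K2.
        apply keep_cls3 with v.
        - lia.
        - destruct (Nat.le_gt_cases (cls m y) 3) as [Hle|Hgt]; [exact Hle|].
          rewrite wtab_big in P; [lra|lia].
        - intro e. apply Nat.eqb_neq in K1. apply K1. apply cls_small with m; [lia|auto].
        - rewrite Hv; auto. }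
      rewrite (G3 u Ku Pu), (G3 w Kw Pw). reflexivity.
Qed.

Lemma G_wf m a b : wf_inst (G m a b).
Proof.
  split; [|split]; simpl; intros.
  - apply wt_nonneg.
  - apply tab_sym.
  - apply tab_irr.
Qed.

Lemma uu_le m : (1 <= m)%nat -> 3 * uu m <= 1.
Proof.
  intro H. apply le_INR in H. simpl in H. unfold uu.
  apply Rmult_le_reg_r with (INR m + 2); [lra|].
  rewrite Rmult_assoc, Rinv_l; lra.
Qed.

Lemma G_props m a b ad rho : (1 <= m)%nat -> 0 <= a <= 1 -> 0 <= b <= 1 -> 0 <= rho <= 1 ->
  (0 <= cost ad rho (G m a b) <= 1) /\ (a < rho < b -> cost ad rho (G m a b) = 1) /\
  (rho < a \/ b < rho -> cost ad rho (G m a b) <= 3 * uu m).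
Proof.
  intros Hm Ha Hb Hr.
  destruct (G_pick m a b ad rho (proj1 Hr)) as (v & Hv & H1 & H2 & Hc).
  pose proof (uu_le m Hm) as U3. pose proof (uu_pos m) as U0.
  assert (Good : wtab m a b 1 + INR m * uu m = 1).
  { simpl. unfold wq, uu. field. pose proof (pos_INR m); lra. }
  destruct (ln_facts m) as (L1 & L2 & L3 & L4).
  assert (Bad : forall c, (c = 0 \/ c = 2)%nat -> 0 <= wtab m a b c <= 3 * uu m).
  { intros c [->| ->]; simpl; unfold wp, wr, wq.
    - pose proof (exp_pos (a * al m)).
      assert (exp (a * al m) <= Dp m / Dq m).
      { replace (Dp m / Dq m) with (exp (al m)).
        - destruct (Rle_lt_or_eq _ _ (proj2 Ha)) as [Hlt| ->].
          + apply Rlt_le; apply exp_increasing. assert (0 < (1 - a) * al m) by (apply Rmult_lt_0_compat; unfold al; lra). lra.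
          + apply Req_le; f_equal; ring.
        - unfold al, Rminus. rewrite exp_plus, exp_Ropp, !exp_ln; [reflexivity| |]; unfold Dp, Dq; pose proof (pos_INR m); lra. }
      assert (Dp m / Dq m <= 3 / 2).
      { unfold Dp, Dq. pose proof (pos_INR m). apply Rmult_le_reg_r with (INR m + 4); [lra|].
        unfold Rdiv. rewrite Rmult_assoc, Rinv_l; lra. }
      split; nra.
    - pose proof (exp_pos (- (b * ga m))).
      assert (exp (- (b * ga m)) <= 1).
      { rewrite <- exp_0. destruct (Rle_lt_or_eq _ _ (proj1 Hb)) as [Hlt| <-].
        + apply Rlt_le; apply exp_increasing. unfold ga. assert (0 < b * (ln (Dq m) - ln (Dr m))) by (apply Rmult_lt_0_compat; lra). lra.
        + apply Req_le; f_equal; ring. }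
      split; nra. }
  assert (Hcases : (v = 1%nat /\ cost ad rho (G m a b) = 1) \/ (v <> 1%nat /\ 0 <= cost ad rho (G m a b) <= 3 * uu m)).
  { destruct (Nat.eq_dec v 1) as [e|ne].
    - left; split; auto. rewrite Hc, e. simpl (1 =? 1)%nat. exact Good.
    - right; split; auto. rewrite Hc. pose proof ne as ne2. apply Nat.eqb_neq in ne2. rewrite ne2, Rplus_0_r. apply Bad. lia. }
  destruct Hcases as [[e Hc1]|[ne Hc2]].
  - split; [lra|split; [auto|]]. intro H; exfalso; apply (H2 H e).
  - split; [lra|split; [|lra]]. intro H; exfalso; apply ne, H1, H.
Qed.


Definition dd (k : nat) (d : R) : R := d / (2 * INR k).
Definition sub (k : nat) (a d : R) (j : nat) : R := a + 2 * INR j * dd k d.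

Fixpoint Dist (m k : nat) (a d : R) (T : nat) : list (R * list Inst) :=
  match T with
  | O => [(1, [])]
  | S T' => flat_map (fun j => map (fun pxs => (fst pxs / INR k, G m (sub k a d j) (sub k a d j + dd k d) :: snd pxs))
                        (Dist m k (sub k a d j) (dd k d) T')) (seq 0 k)
  end.

Fixpoint ltot (ad : bool) (l : list Inst -> R) (xs : list Inst) : R :=
  match xs with
  | [] => 0
  | x :: xs' => cost ad (l []) x + ltot ad (fun h => l (x :: h)) xs'
  end.

Definition sumR {A} (f : A -> R) (l : list A) : R := fold_right Rplus 0 (map f l).

Lemma sumR_flat_map {A B} (f : B -> R) (g : A -> list B) l :
  sumR f (flat_map g l) = sumR (fun j => sumR f (g j)) l.
Proof.
  unfold sumR; induction l; simpl; auto. rewrite map_app, sum_app, IHl; reflexivity.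
Qed.

Lemma sumR_map {A B} (f : B -> R) (g : A -> B) l : sumR f (map g l) = sumR (fun x => f (g x)) l.
Proof. unfold sumR; rewrite map_map; reflexivity. Qed.

Lemma sumR_ext {A} (f g : A -> R) l : (forall x, In x l -> f x = g x) -> sumR f l = sumR g l.
Proof. intro H; unfold sumR; f_equal; apply map_ext_in; auto. Qed.

Lemma sumR_lin {A} (al be : R) (f g : A -> R) l :
  sumR (fun x => al * f x + be * g x) l = al * sumR f l + be * sumR g l.
Proof. unfold sumR; induction l; simpl; [ring|rewrite IHl; ring]. Qed.

Lemma sumR_le {A} (f g : A -> R) l : (forall x, In x l -> f x <= g x) -> sumR f l <= sumR g l.
Proof.
  unfold sumR; induction l; simpl; intros; [lra|].
  apply Rplus_le_compat; [apply H; auto| apply IHl; intros; apply H; auto].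
Qed.

Lemma sumR_const {A} c (l : list A) : sumR (fun _ => c) l = INR (length l) * c.
Proof. unfold sumR; rewrite map_const, sum_repeat; reflexivity. Qed.

Lemma sum_bad (c : nat -> R) l be : NoDup l -> 0 <= be -> (forall j, In j l -> c j <= 1) ->
  (forall j j', In j l -> In j' l -> be < c j -> be < c j' -> j = j') ->
  sumR c l <= 1 + INR (length l) * be.
Proof.
  intros Hnd Hb H1 Hu. unfold sumR.
  induction l as [|j l IH]; cbn [map fold_right length]; [simpl; lra|]. inversion Hnd; subst.
  rewrite S_INR.
  destruct (Rlt_or_le be (c j)) as [Hj|Hj].
  - assert (fold_right Rplus 0 (map c l) <= INR (length l) * be).
    { rewrite <- sumR_const. unfold sumR. apply (sumR_le c (fun _ => be) l).
      intros x Hx. destruct (Rlt_or_le be (c x)); [|auto].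
      exfalso. assert (x = j) by (apply Hu; simpl; auto). subst; contradiction. }
    specialize (H1 j (or_introl eq_refl)). lra.
  - assert (fold_right Rplus 0 (map c l) <= 1 + INR (length l) * be).
    { apply IH; auto. intros; apply H1; simpl; auto. intros; apply Hu; simpl; auto. }
    lra.
Qed.

Lemma dd_pos k d : (1 <= k)%nat -> 0 < d -> 0 < dd k d.
Proof.
  intros Hk Hd. unfold dd. apply le_INR in Hk. simpl in Hk.
  apply Rdiv_lt_0_compat; lra.
Qed.

Lemma dd_mul k d : (1 <= k)%nat -> 2 * INR k * dd k d = d.
Proof.
  intro Hk. unfold dd. apply le_INR in Hk. simpl in Hk. field. lra.
Qed.

Lemma sub_bounds k a d j : (1 <= k)%nat -> 0 < d -> (j < k)%nat ->
  a <= sub k a d j /\ sub k a d j + dd k d <= a + d.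
Proof.
  intros Hk Hd Hj. pose proof (dd_pos k d Hk Hd). pose proof (dd_mul k d Hk).
  unfold sub. pose proof (pos_INR j).
  assert (INR j + 1 <= INR k) by (rewrite <- S_INR; apply le_INR; lia).
  split; nra.
Qed.

Lemma sumR_scal {A} c (f : A -> R) l : sumR (fun x => c * f x) l = c * sumR f l.
Proof. unfold sumR; induction l; simpl; [ring|rewrite IHl; ring]. Qed.

Lemma Dist_sum m k a d T : (1 <= k)%nat -> sumR fst (Dist m k a d T) = 1.
Proof.
  intro Hk. revert a d; induction T as [|T IH]; intros a d.
  - unfold sumR; simpl; ring.
  - simpl Dist. rewrite sumR_flat_map.
    rewrite (sumR_ext _ (fun _ => / INR k)).
    + rewrite sumR_const, length_seq. apply Rinv_r. apply not_0_INR; lia.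
    + intros j _. rewrite sumR_map. simpl fst.
      rewrite (sumR_ext _ (fun x => / INR k * fst x)) by (intros; unfold Rdiv; ring).
      rewrite sumR_scal, IH; ring.
Qed.

Lemma Dist_in m k T : (1 <= m)%nat -> (1 <= k)%nat -> forall a d p xs, 0 <= a -> 0 < d -> a + d <= 1 ->
  In (p, xs) (Dist m k a d T) ->
  0 <= p /\ length xs = T /\ (forall x, In x xs -> exists a' b', 0 <= a' <= 1 /\ 0 <= b' <= 1 /\ x = G m a' b') /\
  (forall ad, exists rho, a < rho < a + d /\ forall x, In x xs -> cost ad rho x = 1).
Proof.
  intros Hm Hk. induction T as [|T IH]; intros a d p xs Ha Hd Had Hin.
  - simpl in Hin. destruct Hin as [e|[]]. inversion e; subst.
    split; [lra|split; [reflexivity|split]].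
    + intros x [].
    + intro ad. exists (a + d / 2). split; [lra|]. intros x [].
  - simpl Dist in Hin. apply in_flat_map in Hin as [j [Hj Hin]].
    apply in_map_iff in Hin as [[p' xs'] [e Hin]]. simpl in e. inversion e; subst; clear e.
    apply in_seq in Hj.
    destruct (sub_bounds k a d j Hk Hd ltac:(lia)) as [S1 S2].
    pose proof (dd_pos k d Hk Hd) as Hdd.
    destruct (IH (sub k a d j) (dd k d) p' xs' ltac:(lra) Hdd ltac:(lra) Hin) as (P1 & P2 & P3 & P4).
    split; [|split; [simpl; auto|split]].
    + unfold Rdiv. apply Rmult_le_pos; auto. apply Rlt_le, Rinv_0_lt_compat. apply lt_0_INR; lia.
    + intros x [<-|Hx]; [|auto]. exists (sub k a d j), (sub k a d j + dd k d). split; [lra|split; [lra|reflexivity]].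
    + intro ad. destruct (P4 ad) as [rho [Hr Hall]]. exists rho. split; [lra|].
      intros x [<-|Hx]; [|auto].
      apply (G_props m (sub k a d j) (sub k a d j + dd k d) ad rho Hm); lra.
Qed.

Lemma Dist_learn m k ad T : (1 <= m)%nat -> (1 <= k)%nat -> forall a d (l : list Inst -> R),
  0 <= a -> 0 < d -> a + d <= 1 -> (forall h, 0 <= l h <= 1) ->
  sumR (fun pxs => fst pxs * ltot ad l (snd pxs)) (Dist m k a d T) <= INR T * (/ INR k + 3 * uu m).
Proof.
  intros Hm Hk. pose proof (uu_pos m) as U0.
  assert (Kp : 0 < INR k) by (apply lt_0_INR; lia).
  assert (Ki : 0 < / INR k) by (apply Rinv_0_lt_compat; auto).
  induction T as [|T IH]; intros a d l Ha Hd Had Hl.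
  - unfold sumR; simpl; lra.
  - simpl Dist. rewrite sumR_flat_map.
    pose (be := / INR k + 3 * uu m).
    pose (c := fun j => cost ad (l []) (G m (sub k a d j) (sub k a d j + dd k d))).
    pose proof (dd_pos k d Hk Hd) as Hdd.
    apply Rle_trans with (sumR (fun j => / INR k * c j + / INR k * (INR T * be)) (seq 0 k)).
    + apply sumR_le. intros j Hj. apply in_seq in Hj.
      destruct (sub_bounds k a d j Hk Hd ltac:(lia)) as [S1 S2].
      rewrite sumR_map. simpl fst; simpl snd. cbn [ltot].
      rewrite (sumR_ext _ (fun pxs => (/ INR k * c j) * fst pxs + / INR k * (fst pxs * ltot ad (fun h => l (G m (sub k a d j) (sub k a d j + dd k d) :: h)) (snd pxs))))
        by (intros; unfold c, Rdiv; ring).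
      rewrite sumR_lin, Dist_sum by auto. rewrite (Rmult_1_r (/ INR k * c j)).
      apply Rplus_le_compat_l. apply Rmult_le_compat_l; [lra|].
      apply IH; try lra. intro h; apply Hl.
    + rewrite sumR_lin, sumR_const, length_seq.
      assert (Hc : sumR c (seq 0 k) <= 1 + INR (length (seq 0 k)) * (3 * uu m)).
      { apply sum_bad.
        - apply seq_NoDup.
        - lra.
        - intros j Hj. apply in_seq in Hj.
          destruct (sub_bounds k a d j Hk Hd ltac:(lia)) as [S1 S2].
          destruct (G_props m (sub k a d j) (sub k a d j + dd k d) ad (l []) Hm ltac:(lra) ltac:(lra) (Hl [])) as [[_ GP] _].
          exact GP.
        - intros j j' Hj Hj' Cj Cj'. apply in_seq in Hj, Hj'.
          assert (In1 : forall i, (i < k)%nat -> 3 * uu m < c i -> sub k a d i <= l [] <= sub k a d i + dd k d).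
          { intros i Hi Ci. destruct (sub_bounds k a d i Hk Hd Hi) as [S1 S2].
            destruct (Rlt_or_le (l []) (sub k a d i)) as [H1|H1].
            - exfalso. pose proof (proj2 (proj2 (G_props m (sub k a d i) (sub k a d i + dd k d) ad (l []) Hm ltac:(lra) ltac:(lra) (Hl []))) (or_introl H1)).
              unfold c in Ci; lra.
            - destruct (Rlt_or_le (sub k a d i + dd k d) (l [])) as [H2|H2]; [|lra].
              exfalso. pose proof (proj2 (proj2 (G_props m (sub k a d i) (sub k a d i + dd k d) ad (l []) Hm ltac:(lra) ltac:(lra) (Hl []))) (or_intror H2)).
              unfold c in Ci; lra. }
          destruct (In1 j ltac:(lia) Cj) as [A1 A2]. destruct (In1 j' ltac:(lia) Cj') as [B1 B2].
          unfold sub in *.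
          assert (E1 : 2 * INR j * dd k d < (2 * INR j' + 2) * dd k d) by lra.
          assert (E2 : 2 * INR j' * dd k d < (2 * INR j + 2) * dd k d) by lra.
          apply Rmult_lt_reg_r in E1; [|auto]. apply Rmult_lt_reg_r in E2; [|auto].
          assert (F1 : INR j < INR (S j')) by (rewrite S_INR; lra).
          assert (F2 : INR j' < INR (S j)) by (rewrite S_INR; lra).
          apply INR_lt in F1, F2. lia. }
      rewrite length_seq in Hc.
      rewrite S_INR.
      replace (/ INR k * (INR k * (INR T * be))) with (INR T * be) by (field; lra).
      assert (X1 : / INR k * sumR c (seq 0 k) <= / INR k * (1 + INR k * (3 * uu m))) by (apply Rmult_le_compat_l; lra).
      assert (X2 : / INR k * (1 + INR k * (3 * uu m)) = be) by (unfold be; field; lra).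
      change (/ INR k + 3 * uu m) with be. lra.
Qed.


Lemma lt_eq {Omega : Type} ad (L : list Inst -> Omega -> R) xs w :
  learner_total ad L xs w = ltot ad (fun h => L h w) xs.
Proof.
  revert L; induction xs as [|x xs IH]; intro L; [reflexivity|].
  unfold learner_total. cbn [length seq map fold_right]. cbn [ltot].
  rewrite <- seq_shift, map_map.
  specialize (IH (fun h w => L (x :: h) w)). unfold learner_total in IH. rewrite <- IH.
  reflexivity.
Qed.

Lemma ltot_bounds ad xs : forall (l : list Inst -> R), (forall h, 0 <= l h <= 1) ->
  (forall x, In x xs -> forall rho, 0 <= rho <= 1 -> 0 <= cost ad rho x <= 1) ->
  0 <= ltot ad l xs <= INR (length xs).
Proof.
  induction xs as [|x xs IH]; intros l Hl Hc; [simpl; lra|].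
  cbn [ltot length]. rewrite S_INR.
  assert (0 <= cost ad (l []) x <= 1) by (apply Hc; [left; auto| apply Hl]).
  assert (0 <= ltot ad (fun h => l (x :: h)) xs <= INR (length xs)).
  { apply IH; [intro; apply Hl| intros; apply Hc; [right|]; auto]. }
  lra.
Qed.

Lemma sum_costs_le ad rho xs : 0 <= rho <= 1 ->
  (forall x, In x xs -> forall rho, 0 <= rho <= 1 -> 0 <= cost ad rho x <= 1) ->
  fold_right Rplus 0 (map (cost ad rho) xs) <= INR (length xs).
Proof.
  intros Hr Hc; induction xs as [|x xs IH]; [simpl; lra|].
  cbn [map fold_right length]. rewrite S_INR.
  assert (cost ad rho x <= 1) by (apply Hc; [left|]; auto).
  assert (fold_right Rplus 0 (map (cost ad rho) xs) <= INR (length xs)) by (apply IH; intros; apply Hc; [right|]; auto).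
  lra.
Qed.

Lemma sum_costs_one ad rho xs : (forall x, In x xs -> cost ad rho x = 1) ->
  fold_right Rplus 0 (map (cost ad rho) xs) = INR (length xs).
Proof.
  intros Hc; induction xs as [|x xs IH]; [reflexivity|].
  cbn [map fold_right length]. rewrite S_INR, Hc, IH; [ring| |left; auto]. intros; apply Hc; right; auto.
Qed.

Lemma best_ge ad xs :
  (forall x, In x xs -> forall rho, 0 <= rho <= 1 -> 0 <= cost ad rho x <= 1) ->
  (exists rho, 0 <= rho <= 1 /\ forall x, In x xs -> cost ad rho x = 1) ->
  INR (length xs) <= best_fixed ad xs.
Proof.
  intros Hc [rho [Hr Hall]]. unfold best_fixed, Rsup.
  set (E := fun s => exists rho, 0 <= rho <= 1 /\ s = fold_right Rplus 0 (map (cost ad rho) xs)).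
  assert (Hex : exists s, is_lub E s).
  { destruct (completeness E) as [s Hs].
    - exists (INR (length xs)). intros s [r [Hr' ->]]. apply sum_costs_le; auto.
    - exists (INR (length xs)). exists rho. split; auto. rewrite sum_costs_one; auto.
    - exists s; auto. }
  pose proof (epsilon_spec (inhabits 0) (is_lub E) Hex) as [Hub _].
  apply Hub. exists rho; split; auto. rewrite sum_costs_one; auto.
Qed.

Lemma bounded_add {Omega : Type} (f g : Omega -> R) : bounded_fun f -> bounded_fun g -> bounded_fun (fun w => f w + g w).
Proof.
  intros [M1 H1] [M2 H2]. exists (M1 + M2). intro w.
  eapply Rle_trans; [apply Rabs_triang|]. specialize (H1 w); specialize (H2 w); lra.
Qed.

Lemma bounded_scal {Omega : Type} c (f : Omega -> R) : bounded_fun f -> bounded_fun (fun w => c * f w).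
Proof.
  intros [M H]. exists (Rabs c * M). intro w. rewrite Rabs_mult.
  apply Rmult_le_compat_l; [apply Rabs_pos| apply H].
Qed.

Lemma bounded_sum {Omega : Type} (F : R * list Inst -> Omega -> R) D :
  (forall pxs, In pxs D -> bounded_fun (F pxs)) ->
  bounded_fun (fun w => sumR (fun pxs => fst pxs * F pxs w) D).
Proof.
  induction D as [|p D IH]; intro HB.
  - exists 0. intro; unfold sumR; simpl; rewrite Rabs_R0; lra.
  - unfold sumR; cbn [map fold_right].
    apply (bounded_add (fun w => fst p * F p w) (fun w => fold_right Rplus 0 (map (fun pxs => fst pxs * F pxs w) D))).
    + apply bounded_scal, HB; left; auto.
    + apply IH; intros; apply HB; right; auto.
Qed.

Lemma E_sum {Omega : Type} (E : (Omega -> R) -> R) (HE : is_expectation E) (F : R * list Inst -> Omega -> R) D :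
  (forall pxs, In pxs D -> bounded_fun (F pxs)) ->
  E (fun w => sumR (fun pxs => fst pxs * F pxs w) D) = sumR (fun pxs => fst pxs * E (F pxs)) D.
Proof.
  destruct HE as (Hc & Ha & Hs & Hm).
  induction D as [|p D IH]; intro HB.
  - unfold sumR; simpl. apply Hc.
  - unfold sumR in *; cbn [map fold_right].
    pose proof (Ha (fun w => fst p * F p w) (fun w => fold_right Rplus 0 (map (fun pxs => fst pxs * F pxs w) D))) as Ha'.
    cbv beta in Ha'. rewrite Ha'.
    + rewrite IH by (intros; apply HB; right; auto).
      rewrite (Hs (fst p) (F p)) by (apply HB; left; auto). reflexivity.
    + apply bounded_scal, HB; left; auto.
    + apply (bounded_sum F D). intros; apply HB; right; auto.
Qed.


Definition E0 : Inst := mkInst 0 (fun _ => 0) (fun _ _ => false).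

Lemma cost_nv0 ad rho x : nv x = 0%nat -> cost ad rho x = 0.
Proof. intro H; unfold cost; rewrite H; reflexivity. Qed.

Lemma eps_cv : Un_cv (fun n => 13 / (INR n + 1)) 0.
Proof.
  intros eps Heps. destruct (archimed_cor1 (eps / 13)) as [N [HN HN0]]; [lra|].
  exists N. intros n Hn. unfold R_dist. rewrite Rminus_0_r.
  pose proof (pos_INR n).
  assert (P : 0 < 13 / (INR n + 1)) by (apply Rdiv_lt_0_compat; lra).
  rewrite Rabs_right by lra.
  assert (HNn : INR N <= INR n) by (apply le_INR; lia).
  assert (HN1 : 0 < INR N) by (apply lt_0_INR; lia).
  assert (13 < eps * INR N).
  { apply Rmult_lt_compat_r with (r := INR N) in HN; auto.
    rewrite Rinv_l in HN by lra. lra. }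
  apply Rmult_lt_reg_r with (INR n + 1); [lra|].
  unfold Rdiv. rewrite Rmult_assoc, Rinv_l by lra. nra.
Qed.

Theorem mainTheorem12 :
  forall adaptive : bool,
  exists eps : nat -> R, Un_cv eps 0 /\
  forall n T : nat, (1 <= T)%nat ->
  exists D : list (R * list Inst), valid_dist adaptive n T D /\
  forall (Omega : Type) (E : (Omega -> R) -> R) (L : list Inst -> Omega -> R),
    is_expectation E ->
    (forall h w, 0 <= L h w <= 1) ->
    expected_regret adaptive T D E L >= 1 - eps n.
Proof.
  intro ad. exists (fun n => 13 / (INR n + 1)). split; [apply eps_cv|].
  intros n T HT.
  assert (HTp : 0 < INR T) by (apply lt_0_INR; lia).
  destruct (le_lt_dec n 12) as [Hn|Hn].
  -
    exists [(1, repeat E0 T)]. split.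
    + split; [|simpl; ring].
      intros p xs [e|[]]. inversion e; subst. split; [lra|split; [apply repeat_length|]].
      intros x Hx. apply repeat_spec in Hx; subst x.
      split; [split; [|split]; simpl; intros; lia|split; [simpl; lia|]].
      intros; rewrite cost_nv0 by reflexivity; lra.
    + intros Omega E L HE HL.
      assert (HB : best_fixed ad (repeat E0 T) = 0).
      { unfold best_fixed, Rsup.
        set (S := fun s => exists rho, 0 <= rho <= 1 /\ s = fold_right Rplus 0 (map (cost ad rho) (repeat E0 T))).
        assert (Z : forall rho, fold_right Rplus 0 (map (cost ad rho) (repeat E0 T)) = 0).
        { intro rho. assert (Zg : forall xs, (forall x, In x xs -> nv x = 0%nat) -> fold_right Rplus 0 (map (cost ad rho) xs) = 0).
          { induction xs as [|x xs IH]; intro Hx; [reflexivity|]. cbn [map fold_right].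
            rewrite cost_nv0 by (apply Hx; left; auto). rewrite IH by (intros; apply Hx; right; auto). ring. }
          apply Zg. intros x Hx; apply repeat_spec in Hx; subst; reflexivity. }
        assert (L0 : is_lub S 0).
        { split.
          - intros s [r [_ ->]]. rewrite Z; lra.
          - intros b Hb. apply Hb. exists 0. split; [lra|]. rewrite Z; reflexivity. }
        pose proof (epsilon_spec (inhabits 0) (is_lub S) (ex_intro _ 0 L0)) as L1.
        set (s := epsilon _ _) in *.
        destruct L0 as [U0 M0]. destruct L1 as [U1 M1].
        apply Rle_antisym; [apply M1; auto| apply M0; auto]. }
      assert (HL0 : learner_total ad L (repeat E0 T) = fun _ => 0).
      { apply functional_extensionality; intro w. rewrite lt_eq.
        assert (G0 : forall xs (l : list Inst -> R), (forall x, In x xs -> nv x = 0%nat) -> ltot ad l xs = 0).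
        { induction xs as [|x xs IH]; intros l Hx; [reflexivity|]. cbn [ltot].
          rewrite cost_nv0 by (apply Hx; left; auto). rewrite IH by (intros; apply Hx; right; auto). ring. }
        apply G0. intros x Hx; apply repeat_spec in Hx; subst; reflexivity. }
      unfold expected_regret. cbn [map fold_right fst snd]. rewrite HB, HL0.
      destruct HE as [Hc _]. rewrite Hc.
      assert (1 <= 13 / (INR n + 1)).
      { assert (INR n <= 12) by (replace 12 with (INR 12) by (simpl; ring); apply le_INR; auto).
        pose proof (pos_INR n).
        apply Rmult_le_reg_r with (INR n + 1); [lra|]. unfold Rdiv; rewrite Rmult_assoc, Rinv_l; lra. }
      replace (/ INR T * (1 * (0 - 0) + 0)) with 0 by ring. lra.
  -
    set (m := ((n - 6) / 2)%nat). set (k := S n).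
    assert (Hdm := Nat.div_mod_eq (n - 6) 2). assert (Hmd := Nat.mod_upper_bound (n - 6) 2 ltac:(lia)).
    fold m in Hdm.
    assert (Hm : (1 <= m)%nat) by lia.
    assert (Hk : (1 <= k)%nat) by (unfold k; lia).
    assert (HNm : (Nm m <= n)%nat) by (unfold Nm; lia).
    exists (Dist m k 0 1 T).
    assert (Cb : forall p xs, In (p, xs) (Dist m k 0 1 T) ->
               forall x, In x xs -> forall rho, 0 <= rho <= 1 -> 0 <= cost ad rho x <= 1).
    { intros p xs Hin x Hx rho Hr.
      destruct (Dist_in m k T Hm Hk 0 1 p xs ltac:(lra) ltac:(lra) ltac:(lra) Hin) as (_ & _ & P3 & _).
      destruct (P3 x Hx) as (a' & b' & Ha' & Hb' & ->).
      apply (G_props m a' b' ad rho Hm Ha' Hb' Hr). }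
    split.
    + split; [|apply Dist_sum; auto].
      intros p xs Hin.
      destruct (Dist_in m k T Hm Hk 0 1 p xs ltac:(lra) ltac:(lra) ltac:(lra) Hin) as (P1 & P2 & P3 & _).
      split; [auto|split; [auto|]]. intros x Hx.
      destruct (P3 x Hx) as (a' & b' & Ha' & Hb' & ->).
      split; [apply G_wf|split; [simpl; auto|]].
      intros; eapply Cb; eauto.
    + intros Omega E L HE HL.
      set (be := / INR k + 3 * uu m).
      assert (Hbe : be <= 13 / (INR n + 1)).
      { unfold be, uu, k. rewrite S_INR.
        assert (INR n + 1 <= 4 * INR m + 8).
        { replace (4 * INR m + 8) with (INR (4 * m + 7) + 1) by (rewrite plus_INR, mult_INR; simpl; ring).
          apply Rplus_le_compat_r, le_INR; lia. }
        pose proof (pos_INR n). pose proof (pos_INR m).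
        assert (3 * / (INR m + 2) <= 12 / (INR n + 1)).
        { apply Rmult_le_reg_r with ((INR m + 2) * (INR n + 1)); [nra|].
          unfold Rdiv. field_simplify; lra. }
        unfold Rdiv in *. lra. }
      set (D := Dist m k 0 1 T).
      set (F := fun pxs : R * list Inst => learner_total ad L (snd pxs)).
      assert (BF : forall pxs, In pxs D -> bounded_fun (F pxs)).
      { intros [p xs] Hin. exists (INR T). intro w. unfold F; simpl snd. rewrite lt_eq.
        destruct (Dist_in m k T Hm Hk 0 1 p xs ltac:(lra) ltac:(lra) ltac:(lra) Hin) as (_ & P2 & _ & _).
        destruct (ltot_bounds ad xs (fun h => L h w) (fun h => HL h w) (Cb p xs Hin)) as [B1 B2].
        rewrite Rabs_right by lra. rewrite P2 in B2; auto. }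
      assert (Lrn : sumR (fun pxs => fst pxs * E (F pxs)) D <= INR T * be).
      { rewrite <- (E_sum E HE F D BF).
        destruct HE as (Hc & Ha & Hs & Hmo).
        rewrite <- (Hc (INR T * be)).
        apply Hmo; [apply bounded_sum; auto| exists (Rabs (INR T * be)); intro; lra|].
        intro w. unfold F. rewrite (sumR_ext _ (fun pxs => fst pxs * ltot ad (fun h => L h w) (snd pxs))).
        - apply Dist_learn; auto; lra.
        - intros; rewrite lt_eq; reflexivity. }
      assert (Bst : INR T <= sumR (fun pxs => fst pxs * best_fixed ad (snd pxs)) D).
      { rewrite <- (Rmult_1_r (INR T)). rewrite <- (Dist_sum m k 0 1 T Hk). fold D.
        rewrite <- sumR_scal.
        apply sumR_le. intros [p xs] Hin. simpl fst; simpl snd.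
        destruct (Dist_in m k T Hm Hk 0 1 p xs ltac:(lra) ltac:(lra) ltac:(lra) Hin) as (P1 & P2 & _ & P4).
        rewrite Rmult_comm. apply Rmult_le_compat_l; auto.
        rewrite <- P2. apply best_ge; [apply (Cb p xs Hin)|].
        destruct (P4 ad) as [rho [Hr Hall]]. exists rho; split; [lra|auto]. }
      unfold expected_regret.
      change (fold_right Rplus 0 (map (fun pxs => fst pxs * (best_fixed ad (snd pxs) - E (learner_total ad L (snd pxs)))) D))
        with (sumR (fun pxs => fst pxs * (best_fixed ad (snd pxs) - E (F pxs))) D).
      rewrite (sumR_ext _ (fun pxs => 1 * (fst pxs * best_fixed ad (snd pxs)) + (-1) * (fst pxs * E (F pxs))))
        by (intros; ring).
      rewrite sumR_lin.
      apply Rle_ge.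
      apply Rle_trans with (/ INR T * (INR T - INR T * be)).
      * replace (/ INR T * (INR T - INR T * be)) with (1 - be) by (field; lra). lra.
      * apply Rmult_le_compat_l; [apply Rlt_le, Rinv_0_lt_compat; auto|]. lra.
Qed.
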